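(* Let $M\in\mathrm{rep}\,G_{m,n}$ be arbitrary and $\ast\in\{ss,cc,tot\}$. Then $$\sum_{I\in\mathbb{I}_{m,n}}\tilde d^\ast_M(I)\cdot\underline{\dim}(V_I)=\underline{\dim}(M),$$ where $\underline{\dim}(X)=(\dim X(v))_{v}$ is the dimension vector indexed by the vertices $v$ of $G_{m,n}$.
   Context: Fix a field $K$. For integers $m,n\ge1$, $G_{m,n}$ is the equioriented commutative $m\times n$ grid: the quiver with vertex set $\{(i,j):1\le i\le m,\ 1\le j\le n\}$ and arrows $(i,j)\to(i,j+1)$ and $(i,j)\to(i+1,j)$, bound by all commutativity relations; $\mathrm{rep}\,G_{m,n}$ is its category of finite-dimensional representations over $K$ satisfying the relations. An interval of $G_{m,n}$ is a nonempty full subquiver $I$ which is connected (as an undirected graph) and convex (whenever $x,y\in I_0$ and there are paths $x\to z$, $z\to y$ in $G_{m,n}$, then $z\in I_0$); $\mathbb{I}_{m,n}$ is the set of intervals ordered by inclusion of vertex sets. The interval representation $V_I$ has $K$ at vertices of $I$, $0$ elsewhere, identity maps on arrows inside $I$ and zero maps otherwise. Essential vertices: $I^{ss}_0$ is the set of sources and sinks of the quiver $I$; $I^{cc}_0=I_0\cap(\mathrm{pr}_1(I^{ss}_0)\times\mathrm{pr}_2(I^{ss}_0))$ with $\mathrm{pr}_1,\mathrm{pr}_2$ coordinate projections; $I^{tot}_0=I_0$. Let $KG_{m,n}$ be the $K$-linear category whose objects are the vertices and whose morphisms are $K$-linear combinations of paths modulo the commutativity relations; representations are $K$-linear functors $KG_{m,n}\to\mathrm{vect}_K$.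 For $\ast\in\{ss,cc,tot\}$, $\mathcal{C}^\ast_I$ is the full subcategory of $KG_{m,n}$ on $I^\ast_0$, and $M^\ast_I:=M|_{\mathcal{C}^\ast_I}$. The compressed multiplicity $\bar d^\ast_M(I)$ is the multiplicity of the indecomposable $(V_I)^\ast_I$ as a direct summand of $M^\ast_I$. Let $\mu$ be the Möbius function of the finite poset $\mathbb{I}_{m,n}$ ($\mu([I,I])=1$, $\mu([I,J])=-\sum_{I\le L<J}\mu([I,L])$ for $I<J$), and $\tilde d^\ast_M(I):=\sum_{J\ge I}\mu([I,J])\,\bar d^\ast_M(J)$. *)

(* Defs.v *)
From HB Require Import structures.
From mathcomp Require Import all_boot all_order all_algebra.
From Stdlib Require Import ClassicalEpsilon.
Set Implicit Arguments. Unset Strict Implicit. Unset Printing Implicit Defensive.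
Import GRing.Theory.
Local Open Scope ring_scope.

Definition pbool (P : Prop) : bool :=
  if excluded_middle_informative P then true else false.

Definition gvert (m n : nat) := ('I_m * 'I_n)%type.

Definition garr m n (x y : gvert m n) : bool :=
  ((nat_of_ord x.1 == y.1) && ((x.2 : nat).+1 == y.2)) ||
  ((nat_of_ord x.2 == y.2) && ((x.1 : nat).+1 == y.1)).

(* There is a path x -> y in G_{m,n} iff x <= y componentwise. *)
Definition gle m n (x y : gvert m n) : bool :=
  ((x.1 <= y.1)%N && (x.2 <= y.2)%N).

(* M(x) = K^(rdim x)
   as row vectors; rmap x y is the image of the (unique up to the relations)
   path class x -> y when gle x y, a (rdim x) x (rdim y) matrix acting on the
   right; Hom(x,y) = 0 otherwise, so rmap x y = 0 then. *)
Record rep (K : fieldType) (m n : nat) := Rep {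
  rdim : gvert m n -> nat;
  rmap : forall x y : gvert m n, 'M[K]_(rdim x, rdim y);
  rmap_id : forall x, rmap x x = 1%:M;
  rmap_comp : forall x y z, gle x y -> gle y z ->
     rmap x z = rmap x y *m rmap y z;
  rmap_zero : forall x y, ~~ gle x y -> rmap x y = 0
}.

Definition gadj m n (I : {set gvert m n}) : rel (gvert m n) :=
  fun x y => [&& x \in I, y \in I & garr x y || garr y x].

Definition is_interval m n (I : {set gvert m n}) : bool :=
  [&& I != set0,
      [forall x in I, forall y in I, connect (gadj I) x y] &
      [forall x in I, forall y in I, forall z,
          (gle x z && gle z y) ==> (z \in I)]].

Definition VI_map (K : fieldType) m n (I : {set gvert m n}) (x y : gvert m n)
  : 'M[K]_((x \in I) : nat, (y \in I) : nat) :=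
  if gle x y then const_mx 1 else 0.

Definition VI_dim m n (I : {set gvert m n}) (x : gvert m n) : nat := (x \in I).

Lemma gle_trans m n (x y z : gvert m n) : gle x y -> gle y z -> gle x z.
Proof.
by rewrite /gle => /andP[a b] /andP[c d]; rewrite (leq_trans a c) (leq_trans b d).
Qed.

Inductive ess_kind := ess_ss | ess_cc | ess_tot.

Definition ss_vert m n (I : {set gvert m n}) : {set gvert m n} :=
  [set x in I | [forall y, garr y x ==> (y \notin I)]
             || [forall y, garr x y ==> (y \notin I)]].

Definition cc_vert m n (I : {set gvert m n}) : {set gvert m n} :=
  [set x in I | [exists a in ss_vert I, nat_of_ord a.1 == x.1]
             && [exists b in ss_vert I, nat_of_ord b.2 == x.2]].

Definition ess_vert (e : ess_kind) m n (I : {set gvert m n}) : {set gvert m n} :=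
  match e with
  | ess_ss => ss_vert I
  | ess_cc => cc_vert I
  | ess_tot => I
  end.

(* Restriction to the full subcategory on a vertex set S: morphisms of the
   restricted representations are families of matrices at vertices of S,
   natural w.r.t. all x <= y with x, y in S.  "N^k is a direct summand of
   X|_S": there are morphisms f_i : N -> X, g_i : X -> N (i < k) on S with
   g_j o f_i = delta_ij id_N. *)
Definition summand_pow (K : fieldType) m n (S : {set gvert m n})
  (dN : gvert m n -> nat) (phiN : forall x y, 'M[K]_(dN x, dN y))
  (dX : gvert m n -> nat) (phiX : forall x y, 'M[K]_(dX x, dX y)) (k : nat)
  : Prop :=
  exists (f : 'I_k -> forall x, 'M[K]_(dN x, dX x))
         (g : 'I_k -> forall x, 'M[K]_(dX x, dN x)),
    [/\ (forall i x y, x \in S -> y \in S -> gle x y ->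
            phiN x y *m f i y = f i x *m phiX x y),
        (forall i x y, x \in S -> y \in S -> gle x y ->
            phiX x y *m g i y = g i x *m phiN x y) &
        (forall i j x, x \in S ->
            f i x *m g j x = if i == j then 1%:M else 0)].

(* Multiplicity of N|_S as a direct summand of X|_S: the largest k with
   (N|_S)^k a direct summand of X|_S (the bound sum_x dX x + 1 is never
   reached when N|_S is nonzero). *)
Definition mult_summand (K : fieldType) m n (S : {set gvert m n})
  (dN : gvert m n -> nat) (phiN : forall x y, 'M[K]_(dN x, dN y))
  (dX : gvert m n -> nat) (phiX : forall x y, 'M[K]_(dX x, dX y)) : nat :=
  \max_(k < (\sum_(x : gvert m n) dX x).+1
         | pbool (summand_pow S phiN phiX k)) k.

Definition dbar (K : fieldType) m n (e : ess_kind) (M : rep K m n)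
  (I : {set gvert m n}) : nat :=
  mult_summand (ess_vert e I) (VI_map K I) (rmap M).

(* Recursion with fuel #|J| (enough since #|L| < #|J|). *)
Fixpoint mob_aux m n (k : nat) (I J : {set gvert m n}) : int :=
  if I == J then 1 else
  match k with
  | 0 => 0
  | k'.+1 =>
      if I \subset J then
        - \sum_(L : {set gvert m n} | [&& is_interval L, I \subset L & L \proper J])
             mob_aux k' I L
      else 0
  end.

Definition mobius m n (I J : {set gvert m n}) : int := mob_aux #|J| I J.

Definition dtilde (K : fieldType) m n (e : ess_kind) (M : rep K m n)
  (I : {set gvert m n}) : int :=
  \sum_(J : {set gvert m n} | is_interval J && (I \subset J))
     mobius I J * (dbar e M J)%:Z.

(* Main.v *)
Require Import Defs.
From HB Require Import structures.
From mathcomp Require Import all_boot all_order all_algebra.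
From mathcomp Require Import zify.
From Stdlib Require Import ClassicalEpsilon.
Import GRing.Theory.
Local Open Scope ring_scope.
Set Implicit Arguments. Unset Strict Implicit.

Lemma mob_aux_fuel m n (I J : {set gvert m n}) k k' :
  (#|J| <= k)%N -> (#|J| <= k')%N -> mob_aux k I J = mob_aux k' I J.
Proof.
elim: k k' J => [|k IH] [|k'] J hk hk' //=.
- case: eqP => // neq; move: hk; rewrite leqn0 => /eqP/cards0_eq E; subst J.
  by rewrite subset0 (introF eqP neq).
- case: eqP => // neq; move: hk'; rewrite leqn0 => /eqP/cards0_eq E; subst J.
  by rewrite subset0 (introF eqP neq).
- case: eqP => // _; case: ifP => // _; congr (- _); apply: eq_bigr => L.
  case/and3P=> _ _ pLJ; have := proper_card pLJ => h.
  apply: IH; lia.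
Qed.

Lemma mob0 m n (I L : {set gvert m n}) : ~~ (I \subset L) -> mobius I L = 0.
Proof.
move=> h; rewrite /mobius; case: #|L| => [|k] /=; rewrite ifN //.
- by apply: contra h => /eqP ->.
- by rewrite (negbTE h).
- by apply: contra h => /eqP ->.
Qed.

Lemma mob_refl m n (I : {set gvert m n}) : mobius I I = 1.
Proof. by rewrite /mobius; case: #|I| => [|k] /=; rewrite eqxx. Qed.

Lemma mob_rec m n (I J : {set gvert m n}) : I \proper J ->
  mobius I J = - \sum_(L | [&& is_interval L, I \subset L & L \proper J]) mobius I L.
Proof.
move=> pIJ; have hc := proper_card pIJ.
have ne : I != J by apply: contraTN pIJ => /eqP ->; rewrite properxx.
have sIJ : I \subset J by case/andP: pIJ.
rewrite /mobius; case E: #|J| => [|k]; first by rewrite E in hc.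
rewrite /= (negbTE ne) sIJ; congr (- _); apply: eq_bigr => L.
case/and3P=> _ _ pLJ; have := proper_card pLJ => h.
apply: mob_aux_fuel => //; lia.
Qed.

Definition zeta m n (I J : {set gvert m n}) : int := ((I \subset J) : nat)%:Z.

Lemma muZ m n (I J : {set gvert m n}) : is_interval I -> is_interval J ->
  \sum_(L | is_interval L) mobius I L * zeta L J = (I == J)%:R.
Proof.
move=> hI hJ.
have -> : \sum_(L | is_interval L) mobius I L * zeta L J =
          \sum_(L | [&& is_interval L, I \subset L & L \subset J]) mobius I L.
  rewrite big_mkcond [RHS]big_mkcond; apply: eq_bigr => L _.
  rewrite /zeta; case: (is_interval L) => //=.
  case: (boolP (I \subset L)) => sIL /=; last by rewrite mob0 // mul0r; case: (_ \subset _).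
  by case: (L \subset J); rewrite ?mulr1 ?mulr0.
case: eqP => [<-|neq].
  rewrite (bigD1 I) /=; last by rewrite hI !subxx.
  rewrite mob_refl big1 ?addr0 // => L /andP[/and3P[_ a b] c].
  by case/negP: c; rewrite eqEsubset b a.
case: (boolP (I \subset J)) => sIJ; last first.
  rewrite big1 // => L /and3P[_ a b]; by case/negP: sIJ; apply: subset_trans a b.
have pIJ : I \proper J by rewrite properEneq sIJ andbT; apply/eqP.
rewrite (bigD1 J) /=; last by rewrite hJ sIJ subxx.
rewrite (mob_rec pIJ) addrC; apply/eqP; rewrite subr_eq0; apply/eqP.
apply: eq_bigl => L; rewrite properEneq.
by case: (is_interval L) (I \subset L) (L \subset J) (L != J) => [] [] [] [].
Qed.
Lemma Zmu m n (I J : {set gvert m n}) : is_interval I -> is_interval J ->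
  \sum_(L | is_interval L) zeta I L * mobius L J = (I == J)%:R.
Proof.
move=> hI hJ.
pose A := [pred L : {set gvert m n} | is_interval L].
pose mx (F : {set gvert m n} -> {set gvert m n} -> int) : 'M[int]_#|A| :=
  \matrix_(i, j) F (enum_val i) (enum_val j).
have conv (G : {set gvert m n} -> int) :
    \sum_(L | is_interval L) G L = \sum_(k < #|A|) G (enum_val k).
  by rewrite -big_enum_val.
have h1 : mx (@mobius m n) *m mx (@zeta m n) = 1%:M.
  apply/matrixP => i j; rewrite !mxE.
  have E := muZ (enum_valP i) (enum_valP j); rewrite conv in E.
  rewrite -(inj_eq enum_val_inj) -E; apply: eq_bigr => k _; by rewrite !mxE.
have h2 := mulmx1C h1.
have /matrixP/(_ (enum_rank_in hI I) (enum_rank_in hJ J)) := h2.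
rewrite !mxE -(inj_eq enum_val_inj) !enum_rankK_in ?inE // => <-; rewrite conv.
by apply: eq_bigr => k _; rewrite !mxE !enum_rankK_in ?inE.
Qed.
Lemma gle_anti m n (x y : gvert m n) : gle x y -> gle y x -> x = y.
Proof.
case: x y => [a b] [c d]; rewrite /gle /= => /andP[h1 h2] /andP[h3 h4].
by congr pair; apply/val_inj/eqP; rewrite eqn_leq ?h1 ?h2 ?h3 ?h4.
Qed.

Lemma interval1 m n (v : gvert m n) : is_interval [set v].
Proof.
apply/and3P; split.
- by apply/set0Pn; exists v; rewrite set11.
- apply/forall_inP => x /set1P ->; apply/forall_inP => y /set1P ->.
  exact: connect0.
- apply/forall_inP => x /set1P ->; apply/forall_inP => y /set1P ->.
  apply/forallP => z; apply/implyP => /andP[a b].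
  by rewrite (gle_anti b a) set11.
Qed.

Lemma garr_irr m n (x : gvert m n) : garr x x = false.
Proof.
rewrite /garr; apply/negP => /orP[] /andP[_ /eqP h]; lia.
Qed.

Lemma ess1 m n e (v x : gvert m n) : (x \in ess_vert e [set v]) = (x == v).
Proof.
have hss : forall x, (x \in ss_vert [set v]) = (x == v).
  move=> y; rewrite /ss_vert inE in_set1; case: eqP => //= ->.
  apply/orP; left; apply/forallP => y'; apply/implyP => h.
  by rewrite in_set1; apply: contraTN h => /eqP ->; rewrite garr_irr.
case: e => /=; [exact: hss| |by rewrite in_set1].
rewrite /cc_vert inE in_set1; case: eqP => //= ->.
apply/andP; split; apply/exists_inP; exists v; rewrite ?hss ?eqxx //.
Qed.

Lemma const1 (K : fieldType) d : (d <= 1)%N -> const_mx 1 = 1%:M :> 'M[K]_d.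
Proof.
move=> hd; apply/matrixP => a b; rewrite !mxE.
have -> : a = b by apply/ord_inj; move: (ltn_ord a) (ltn_ord b) hd; clear; lia.
by rewrite eqxx.
Qed.

Lemma pboolE (P : Prop) : pbool P = true <-> P.
Proof. by rewrite /pbool; case: excluded_middle_informative. Qed.

Lemma dbar1 (K : fieldType) m n e (M : rep K m n) (v : gvert m n) :
  dbar e M [set v] = rdim M v.
Proof.
rewrite /dbar /mult_summand.
set S := ess_vert e [set v].
have hS : forall x, x \in S -> x = v by move=> x; rewrite ess1 => /eqP.
have vS : v \in S by rewrite ess1.
have dN1 : VI_dim [set v] v = 1%N by rewrite /VI_dim set11.
have phiN1 : VI_map K [set v] v v = 1%:M.
  by rewrite /VI_map /gle !leqnn /= const1 // /VI_dim; case: (_ \in _).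
apply/eqP; rewrite eqn_leq; apply/andP; split.
- apply/bigmax_leqP => k /pboolE [f [g [_ _ hfg]]].
  have h0 : (0 < VI_dim [set v] v)%N by rewrite dN1.
  pose a0 := Ordinal h0.
  pose F : 'M[K]_(k, rdim M v) := \matrix_(i, b) f i v a0 b.
  pose G : 'M[K]_(rdim M v, k) := \matrix_(b, j) g j v b a0.
  have FG : F *m G = 1%:M.
    apply/matrixP => i j; rewrite !mxE.
    have := hfg i j v vS => /matrixP/(_ a0 a0).
    have -> : (if i == j then 1%:M else 0 : 'M[K]_(VI_dim [set v] v)) a0 a0 = (i == j)%:R.
      by case: (i == j); rewrite !mxE ?eqxx.
    rewrite !mxE => <-.
    by apply: eq_bigr => b _; rewrite !mxE.
  have := mxrankM_maxl F G; rewrite FG mxrank1 => h.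
  exact: leq_trans h (rank_leq_col F).
- have hlt : (rdim M v < (\sum_x rdim M x).+1)%N.
    by rewrite ltnS (bigD1 v) //= leq_addr.
  apply: (@leq_bigmax_cond _ _ (fun k : 'I_ _ => nat_of_ord k) (Ordinal hlt)).
  apply/pboolE.
  exists (fun i x => \matrix_(a, b) ((b : nat) == (i : nat))%:R).
  exists (fun i x => \matrix_(b, a) ((b : nat) == (i : nat))%:R).
  split.
  + move=> i x y /hS -> /hS -> _; rewrite phiN1 rmap_id mul1mx mulmx1 //.
  + move=> i x y /hS -> /hS -> _; rewrite phiN1 rmap_id mul1mx mulmx1 //.
  + move=> i j x /hS ->; apply/matrixP => a a'.
    have -> : a = a'.
      apply/ord_inj; have ha := ltn_ord a; have ha' := ltn_ord a'.
      have hd : (nat_of_bool (v \in [set v]) <= 1)%N by case: (_ \in _).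
      move: ha ha' hd; rewrite /VI_dim; clear; lia.
    rewrite mxE (bigD1 i) //= !mxE eqxx mul1r big1 ?addr0.
      rewrite (_ : ((i:nat) == j) = (i == j)) //.
      by case: (i == j); rewrite ?mxE ?eqxx.
    move=> b nb; rewrite !mxE (_ : ((b:nat) == i) = (b == i)) //.
    by rewrite (negbTE nb) mul0r.
Qed.

Theorem mainTheorem16 (K : fieldType) (m n : nat) (hm : (0 < m)%N) (hn : (0 < n)%N)
  (M : rep K m n) (e : ess_kind) :
  forall v : gvert m n,
    \sum_(I : {set gvert m n} | is_interval I) dtilde e M I * (VI_dim I v)%:Z
    = (rdim M v)%:Z.
Proof.
move=> v; rewrite -(dbar1 e M v).
set d := fun J => (dbar e M J)%:Z.
have h1 : forall I, is_interval I ->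
    dtilde e M I * (VI_dim I v)%:Z =
    \sum_(J | is_interval J) zeta [set v] I * mobius I J * d J.
  move=> I hI; rewrite /dtilde mulrC mulr_sumr big_mkcond [RHS]big_mkcond.
  apply: eq_bigr => J _; case: (is_interval J) => //=.
  have -> : (VI_dim I v)%:Z = zeta [set v] I by rewrite /zeta sub1set.
  case: (boolP (I \subset J)) => h /=; first by rewrite mulrA.
  by rewrite mob0 // mulr0 mul0r.
rewrite (eq_bigr (fun I => \sum_(J | is_interval J) zeta [set v] I * mobius I J * d J) h1).
rewrite exchange_big /=.
rewrite (eq_bigr (fun J => ([set v] == J)%:R * d J)); last first.
  by move=> J hJ; rewrite -mulr_suml Zmu ?interval1.
rewrite (bigD1 [set v]) ?interval1 //= big1 ?addr0 ?eqxx ?mul1r //.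
move=> J /andP[hJ nJ].
by rewrite eq_sym (negbTE nJ) mul0r.
Qed.
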